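(* Let $(X_n,\|\cdot\|_n)_{n\ge1}$ be a sequence of Banach spaces, let $(X,\|\cdot\|)$ be the space defined in the context, and let $x=(x_1,x_2,\dots)$ be a nonzero vector of $X$. Then there exist $k\ge2$ and a sequence $(d_n)_{n\ge1}\subseteq(0,1]$ such that $d_n=1-\frac1{n+1}$ for all $n\ge k$ and $$\|x\|=\sum_{n=1}^\infty d_n\|x_n\|_n.$$
   Context: $c_{00}((X_n))$ is the vector space of sequences $(x_1,x_2,\dots)$ with $x_k\in X_k$ and only finitely many $x_k\ne0$; $(x_1,\dots,x_n)$ denotes $(x_1,\dots,x_n,0,0,\dots)$. On $c_{00}((X_n))$ define inductively $\|(x_1)\|=\|x_1\|_1$ (the norm of $X_1$) and, for $n\ge2$, $$\|(x_1,\dots,x_n)\|=\Big(1-\tfrac{1}{n+1}\Big)\big(\|x_n\|_n+\|(x_1,\dots,x_{n-1})\|\big)+\tfrac{1}{n+1}\max\Big\{\tfrac{\|x_n\|_n}{n},\ \|(x_1,\dots,x_{n-1})\|\Big\}.$$ $X$ is the completion of $(c_{00}((X_n)),\|\cdot\|)$, identified with the space of sequences $x=(x_n)$, $x_n\in X_n$, with $\sum_n\|x_n\|_n<\infty$, where $\|x\|=\lim_k\|(x_1,\dots,x_k)\|$. *)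

(* Defs.v *)
From HB Require Import structures.
From mathcomp Require Import all_boot all_order all_algebra.
From mathcomp Require Import all_classical all_reals all_analysis.
Set Implicit Arguments. Unset Strict Implicit. Unset Printing Implicit Defensive.
Import Order.TTheory GRing.Theory Num.Theory.
Import numFieldNormedType.Exports.
Local Open Scope classical_set_scope.
Local Open Scope ring_scope.

(* Given a n = ||x_n||_n (1-indexed, a 0 unused), [pnorm a n] is the norm
   ||(x_1,...,x_n)|| from the inductive definition:
   ||(x_1)|| = ||x_1||_1 and for n >= 2
   ||(x_1..x_n)|| = (1-1/(n+1)) (||x_n|| + ||(x_1..x_{n-1})||)
                   + 1/(n+1) max(||x_n||/n, ||(x_1..x_{n-1})||).
   pnorm a 0 = 0 (empty tuple). *)
Fixpoint pnorm {R : realType} (a : nat -> R) (n : nat) : R :=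
  match n with
  | 0%N => 0
  | S m =>
    match m with
    | 0%N => a 1%N
    | S _ => (1 - 1 / (n.+1)%:R) * (a n + pnorm a m)
             + 1 / (n.+1)%:R * Num.max (a n / n%:R) (pnorm a m)
    end
  end.

Definition Xnorm {R : realType} (X : nat -> normedModType R)
  (x : forall n, X n) : R :=
  lim (pnorm (fun n => `|x n|) @ \oo).

(* Main.v *)
Require Import Defs.
From HB Require Import structures.
From mathcomp Require Import all_boot all_order all_algebra.
From mathcomp Require Import all_classical all_reals all_analysis.
From mathcomp Require Import ring lra zify.
Import Order.TTheory GRing.Theory Num.Theory.
Import numFieldNormedType.Exports.
Local Open Scope classical_set_scope.
Local Open Scope ring_scope.

Section H.
Variables (R : realType) (a : nat -> R).
Hypothesis ha : forall n, 0 <= a n.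

Lemma pnormS n : (1 <= n)%N -> pnorm a n.+1 =
  (1 - 1 / (n.+2)%:R) * (a n.+1 + pnorm a n)
  + 1 / (n.+2)%:R * Num.max (a n.+1 / (n.+1)%:R) (pnorm a n).
Proof. by case: n. Qed.

Lemma cbounds n : 0 < 1 / (n.+2)%:R :> R /\ 1 / (n.+2)%:R < 1 :> R.
Proof.
split; first by rewrite divr_gt0 // ltr0n.
by rewrite ltr_pdivrMr ?ltr0n // mul1r ltr1n.
Qed.

Lemma pnorm_ge0 n : 0 <= pnorm a n.
Proof.
elim: n => [|[|n] IH] //; first exact: ha.
rewrite pnormS //.
have [c0 c1] := cbounds n.+1.
set c := 1 / _. rewrite -/c in c0 c1.
have hm : 0 <= Num.max (a n.+2 / (n.+2)%:R) (pnorm a n.+1).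
  by rewrite le_max IH orbT.
have := ha n.+2. nra.
Qed.

Lemma pnorm_step n : pnorm a n <= pnorm a n.+1.
Proof.
case: n => [|n]; first exact: ha.
rewrite (pnormS n.+1) //.
have [c0 c1] := cbounds n.+1.
set c := 1 / _. rewrite -/c in c0 c1.
have hm : pnorm a n.+1 <= Num.max (a n.+2 / (n.+2)%:R) (pnorm a n.+1).
  by rewrite le_max lexx orbT.
have := ha n.+2. nra.
Qed.

Lemma pnorm_homo : {homo pnorm a : m n / (m <= n)%N >-> m <= n}.
Proof. apply: homo_leq => //; [exact: le_trans | exact: pnorm_step]. Qed.

Lemma pnorm_pos m : (1 <= m)%N -> 0 < a m -> 0 < pnorm a m.
Proof.
case: m => [|[|n]] // _ hm. rewrite pnormS //.
have [c0 c1] := cbounds n.+1.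
set c := 1 / _. rewrite -/c in c0 c1.
have hM : 0 <= Num.max (a n.+2 / (n.+2)%:R) (pnorm a n.+1).
  by rewrite le_max pnorm_ge0 orbT.
have := pnorm_ge0 n.+1. nra.
Qed.

Lemma pnorm_ub n : pnorm a n <= \sum_(1 <= i < n.+1) a i.
Proof.
elim: n => [|[|n] IH]; first by rewrite big_geq.
  by rewrite /= big_nat1.
have -> : \sum_(1 <= i < n.+3) a i = \sum_(1 <= i < n.+2) a i + a n.+2.
  by rewrite big_nat_recr.
rewrite pnormS //.
have [c0 c1] := cbounds n.+1.
set c := 1 / _. rewrite -/c in c0 c1.
have hM : Num.max (a n.+2 / (n.+2)%:R) (pnorm a n.+1) <= a n.+2 + pnorm a n.+1.
  rewrite ge_max; apply/andP; split; last by rewrite lerDr ha.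
  apply: (le_trans (y := a n.+2)); last by rewrite lerDl pnorm_ge0.
  by rewrite ler_pdivrMr ?ltr0n // ler_peMr // ler1n.
have := ha n.+2. nra.
Qed.

Lemma pnorm_coef n : (1 <= n)%N -> exists d : nat -> R,
  (forall i, (1 <= i)%N -> 0 < d i <= 1) /\
  pnorm a n = \sum_(1 <= i < n.+1) d i * a i.
Proof.
elim: n => [|[|n] IH] // _.
  exists (fun=> 1); split; first by move=> *; rewrite ltr01 lexx.
  by rewrite big_nat1 mul1r.
rewrite pnormS //.
have [d [hd ->]] := IH isT.
have [c0 c1] := cbounds n.+1.
set c := 1 / (n.+3)%:R in c0 c1.
have hn : 0 < (n.+2)%:R :> R by rewrite ltr0n.
have hn1 : 1 <= (n.+2)%:R :> R by rewrite ler1n.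
have hac : 0 <= c / (n.+2)%:R <= c.
  apply/andP; split; first by apply: divr_ge0; lra.
  by rewrite ler_pdivrMr // ler_peMr // ltW.
rewrite -/c.
set p := \sum_(1 <= i < n.+2) d i * a i.
have [hle|hlt] := leP (a n.+2 / (n.+2)%:R) p.
- exists (fun i => if i == n.+2 then 1 - c else d i); split.
    move=> i hi; case: ifP => _; last exact: hd.
    apply/andP; split; lra.
  rewrite big_nat_recr //= eqxx.
  rewrite (eq_big_nat _ _ (F2 := fun i => d i * a i)); last first.
    by move=> i /andP [_ hi]; rewrite ifN // neq_ltn hi.
  rewrite -/p. lra.
- exists (fun i => if i == n.+2 then 1 - c + c / (n.+2)%:R else (1 - c) * d i); split.
    move=> i hi; case: ifP => _.
      case/andP: hac => h1 h2; move: h1 h2 c0 c1; rewrite -/c; generalize (c / (n.+2)%:R) => e h1 h2 c0 c1.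
      apply/andP; split; lra.
    have /andP [h1 h2] := hd i hi.
    apply/andP; split; nra.
  rewrite big_nat_recr //= eqxx.
  rewrite (eq_big_nat _ _ (F2 := fun i => (1 - c) * (d i * a i))); last first.
    by move=> i /andP [_ hi]; rewrite ifN ?mulrA // neq_ltn hi.
  rewrite -mulr_sumr -/p. ring.
Qed.

End H.

Theorem corollary1p6 (R : realType) (X : nat -> completeNormedModType R)
  (x : forall n, X n)
  (hsum : cvg ((\sum_(1 <= n < N) `|x n|) @[N --> \oo]))
  (hnz : exists n, (1 <= n)%N /\ x n <> 0) :
  exists k : nat, (2 <= k)%N /\
    exists d : nat -> R,
      (forall n, (1 <= n)%N -> 0 < d n <= 1) /\
      (forall n, (k <= n)%N -> d n = 1 - 1 / (n.+1)%:R) /\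
      Xnorm x = limn (fun N => \sum_(1 <= n < N) (d n * `|x n|)).
Proof.
rewrite /Xnorm.
set a := fun n => `|x n|.
have ha : forall n, 0 <= a n by move=> n; exact: normr_ge0.
set s := fun N => \sum_(1 <= n < N) a n.
have hs : cvgn s by exact: hsum.
set L := limn s.
have sL : s @ \oo --> L by exact: hs.
have smono : {homo s : m n / (m <= n)%N >-> m <= n}.
  apply: homo_leq => //; [exact: le_trans| move=> n].
  case: n => [|n]; first by rewrite /s !big_geq.
  have -> : s n.+2 = s n.+1 + a n.+1 by rewrite /s big_nat_recr.
  by rewrite lerDl.
have a0 : (fun N => a N.+1) @ \oo --> 0.
  have -> : (fun N => a N.+1) = (fun N => s N.+2 - s N.+1).
    apply: funext => N.
    have -> : s N.+2 = s N.+1 + a N.+1 by rewrite /s big_nat_recr.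
    by rewrite addrC addKr.
  rewrite -(subrr L).
  apply: cvgB.
    by rewrite (cvg_shiftS (fun n => s n.+1)) cvg_shiftS.
  by rewrite cvg_shiftS.
have [m [hm1 hm]] := hnz.
have am : 0 < a m by rewrite /a normr_gt0; apply/eqP.
have Pm := @pnorm_pos R a ha m hm1 am.
have := proj1 (cvgr0Pnorm_lt _) a0 _ Pm.
move=> [N0 _ hN0].
set k := maxn N0 m.
have hK : forall n, (k.+2 <= n.+1)%N -> a n.+1 / (n.+1)%:R <= pnorm a n.
  move=> n hn.
  have hN : (N0 <= n)%N by move: hn; rewrite /k; lia.
  have := hN0 _ hN.
  rewrite ger0_norm // => hlt.
  apply: (le_trans (y := a n.+1)).
    by rewrite ler_pdivrMr ?ltr0n // ler_peMr // ler1n.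
  apply: (le_trans (ltW hlt)); apply: (@pnorm_homo R a ha).
  by move: hn; rewrite /k; lia.
have [d [hd hp]] := @pnorm_coef R a k.+1 isT.
pose D i := if (i < k.+2)%N then d i else 1 - 1 / (i.+1)%:R.
have tail : forall j, pnorm a (k.+1 + j) = \sum_(1 <= i < (k.+1 + j).+1) D i * a i.
  elim=> [|j IH].
    rewrite addn0 hp; apply: eq_big_nat => i /andP [_ hi].
    by rewrite /D hi.
  rewrite addnS (@pnormS R a (k.+1 + j)) // max_r; last by apply: hK; lia.
  have -> : \sum_(1 <= i < (k.+1 + j).+2) D i * a i =
    \sum_(1 <= i < (k.+1 + j).+1) D i * a i + D (k.+1 + j).+1 * a (k.+1 + j).+1.
    by rewrite big_nat_recr.
  rewrite -IH /D ifN; last by rewrite -leqNgt; lia.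
  ring.
have pcv : cvgn (pnorm a).
  apply: nondecreasing_is_cvgn; first exact: (@pnorm_homo R a ha).
  exists L => _ [n _ <-].
  apply: (le_trans (@pnorm_ub R a ha n)).
  exact: (nondecreasing_cvgn_le smono hs n.+1).
exists k.+2; split => //.
exists D; split.
  move=> i hi; rewrite /D; case: ifP => _; first exact: hd.
  case: i hi => [|i] // _.
  have [c0 c1] := cbounds R i.
  set c := 1 / (i.+2)%:R in c0 c1 *. apply/andP; split; lra.
split.
  by move=> i hi; rewrite /D ltnNge hi.
apply/esym/cvg_lim => //.
rewrite -(cvg_shiftn k.+2).
have -> : (fun n => \sum_(1 <= i < (n + k.+2)%N) D i * a i) = (fun n => pnorm a (n + k.+1)).
  apply: funext => n.
  have -> : (n + k.+2 = (k.+1 + n).+1)%N by lia.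
  by rewrite (addnC n); exact: (esym (tail n)).
by rewrite cvg_shiftn.
Qed.
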